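(* Let $R>0$, let $\partial\mathcal{B}=\{\boldsymbol{x}\in\mathbb{R}^d:\|\boldsymbol{x}\|_2=R\}$, and let $\boldsymbol{x}_0\in\mathbb{R}^d$ with $\boldsymbol{x}_0\neq0$ and $\|\boldsymbol{x}_0\|_2\neq R$. Let $\boldsymbol{x}^*=R\boldsymbol{x}_0/\|\boldsymbol{x}_0\|_2$ be the closest point of $\partial\mathcal{B}$ to $\boldsymbol{x}_0$ and $\mathcal{T}=\{\boldsymbol{x}:\langle\boldsymbol{x}-\boldsymbol{x}^*,\boldsymbol{x}^*\rangle=0\}$ the tangent hyperplane to $\partial\mathcal{B}$ at $\boldsymbol{x}^*$. Let $\mathcal{S}\subseteq\mathbb{R}^d$ be a linear subspace with orthogonal projection $\mathbf{P}_{\mathcal S}$ such that $\mathbf{P}_{\mathcal S}\boldsymbol{x}_0\neq0$ and such that there exists $\boldsymbol{r}\in\mathcal S$ with $\boldsymbol{x}_0+\boldsymbol{r}\in\partial\mathcal{B}$. Let $\boldsymbol{r}^{\mathcal T}_{\mathcal S}$ be the minimizer of $\|\boldsymbol{r}\|_2$ over $\{\boldsymbol{r}\in\mathcal S:\boldsymbol{x}_0+\boldsymbol{r}\in\mathcal T\}$ and let $\boldsymbol{r}^{\mathcal B}_{\mathcal S}$ be any minimizer of $\|\boldsymbol{r}\|_2$ over $\{\boldsymbol{r}\in\mathcal S:\boldsymbol{x}_0+\boldsymbol{r}\in\partial\mathcal B\}$. Then $\boldsymbol{r}^{\mathcal T}_{\mathcal S}$ and $\boldsymbol{r}^{\mathcal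 B}_{\mathcal S}$ are both scalar multiples of $\mathbf{P}_{\mathcal S}\boldsymbol{x}_0$; in particular they are collinear. *)

(* Defs.v *)
(* vectors in R^d are row vectors 'rV[R]_d over a real closed
   field R (so that the Euclidean norm, which needs a square root, exists). *)
From HB Require Import structures.
From mathcomp Require Import all_boot all_order all_algebra.
Set Implicit Arguments. Unset Strict Implicit. Unset Printing Implicit Defensive.
Import Order.TTheory GRing.Theory Num.Theory.
Local Open Scope ring_scope.

Definition dotv (R : rcfType) (d : nat) (u v : 'rV[R]_d) : R := (u *m v^T) 0 0.

Definition norm2 (R : rcfType) (d : nat) (u : 'rV[R]_d) : R := Num.sqrt (dotv u u).

(* A linear subspace S of R^d is represented by a matrix whose row space is S;
   u \in S is (u <= S)%MS.  p is the orthogonal projection P_S x of x onto S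
   iff p \in S and x - p is orthogonal to every vector of S. *)
Definition is_orth_proj (R : rcfType) (d m : nat) (S : 'M[R]_(m, d))
  (x p : 'rV[R]_d) : Prop :=
  (p <= S)%MS /\ forall s : 'rV[R]_d, (s <= S)%MS -> dotv (x - p) s = 0.

Definition is_norm_minimizer (R : rcfType) (d : nat) (C : 'rV[R]_d -> Prop)
  (r0 : 'rV[R]_d) : Prop :=
  C r0 /\ forall r, C r -> norm2 r0 <= norm2 r.

(* Main.v *)
Require Import Defs.
From HB Require Import structures.
From mathcomp Require Import all_boot all_order all_algebra.
From mathcomp Require Import lra.
Import Order.TTheory GRing.Theory Num.Theory.
Set Implicit Arguments.
Local Open Scope ring_scope.

Section H.
Variables (R : rcfType) (d : nat).
Implicit Types u v w : 'rV[R]_d.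

Lemma dotvE u v : dotv u v = \sum_j u 0 j * v 0 j.
Proof. by rewrite /dotv !mxE; apply: eq_bigr => j _; rewrite !mxE. Qed.

Lemma dotvC u v : dotv u v = dotv v u.
Proof. by rewrite !dotvE; apply: eq_bigr => j _; rewrite mulrC. Qed.

Lemma dotvDl u v w : dotv (u + v) w = dotv u w + dotv v w.
Proof. by rewrite /dotv mulmxDl mxE. Qed.
Lemma dotvZl a u w : dotv (a *: u) w = a * dotv u w.
Proof. by rewrite /dotv -scalemxAl mxE. Qed.
Lemma dotvNl u w : dotv (- u) w = - dotv u w.
Proof. by rewrite -scaleN1r dotvZl mulN1r. Qed.
Lemma dotvBl u v w : dotv (u - v) w = dotv u w - dotv v w.
Proof. by rewrite dotvDl dotvNl. Qed.
Lemma dotvDr u v w : dotv w (u + v) = dotv w u + dotv w v.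
Proof. by rewrite dotvC dotvDl !(dotvC w). Qed.
Lemma dotvZr a u w : dotv w (a *: u) = a * dotv w u.
Proof. by rewrite dotvC dotvZl dotvC. Qed.
Lemma dotvBr u v w : dotv w (u - v) = dotv w u - dotv w v.
Proof. by rewrite dotvC dotvBl !(dotvC w). Qed.

Lemma dotv_ge0 u : 0 <= dotv u u.
Proof. by rewrite dotvE sumr_ge0 // => j _; rewrite -expr2 sqr_ge0. Qed.

Lemma dotv_eq0 u : dotv u u = 0 -> u = 0.
Proof.
rewrite dotvE => /psumr_eq0P H.
apply/matrixP => i j; rewrite ord1 mxE.
have /eqP := H (fun k _ => ltac:(by rewrite -expr2 sqr_ge0)) j isT.
by rewrite -expr2 sqrf_eq0 => /eqP.
Qed.
End H.
Arguments dotv_ge0 {R d}.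
Arguments dotv_eq0 {R d}.
Arguments dotvC {R d}.


Lemma decomp (R : rcfType) (d m : nat) (S : 'M[R]_(m, d)) (x0 P r : 'rV[R]_d) :
  is_orth_proj S x0 P -> P != 0 -> (r <= S)%MS ->
  exists a w, r = a *: P + w /\ (w <= S)%MS /\ dotv w P = 0 /\ dotv P w = 0 /\
    dotv x0 w = 0 /\ dotv w x0 = 0 /\ dotv x0 P = dotv P P /\ dotv P x0 = dotv P P.
Proof.
move=> [PS orth] P0 rS.
have pos : dotv P P != 0 by apply: contra P0 => /eqP/dotv_eq0 ->.
set a := dotv r P / dotv P P.
have wS : (r - a *: P <= S)%MS by rewrite addmx_sub // -scaleNr scalemx_sub.
have wP : dotv (r - a *: P) P = 0 by rewrite dotvBl dotvZl /a mulfVK // subrr.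
have x0P : dotv x0 P = dotv P P.
  by move: (orth P PS); rewrite dotvBl => /eqP; rewrite subr_eq0 => /eqP.
have x0w : dotv x0 (r - a *: P) = 0.
  by move: (orth _ wS); rewrite dotvBl (@dotvC _ _ P) wP subr0.
exists a, (r - a *: P); do !split => //.
- by rewrite addrC subrK.
- by rewrite dotvC.
- by rewrite dotvC.
- by rewrite dotvC.
Qed.

Arguments decomp {R d m S x0 P r}.

Theorem lemma6 (R : rcfType) (d m : nat) (Rad : R) (x0 : 'rV[R]_d)
  (S : 'M[R]_(m, d)) (Px0 rT rB : 'rV[R]_d) :
  0 < Rad ->
  x0 != 0 ->
  norm2 x0 != Rad ->
  is_orth_proj S x0 Px0 ->
  Px0 != 0 ->
  (exists r : 'rV[R]_d, (r <= S)%MS /\ norm2 (x0 + r) = Rad) ->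
  let xstar := (Rad / norm2 x0) *: x0 in
  is_norm_minimizer
    (fun r => (r <= S)%MS /\ dotv (x0 + r - xstar) xstar = 0) rT ->
  is_norm_minimizer
    (fun r => (r <= S)%MS /\ norm2 (x0 + r) = Rad) rB ->
  (exists c : R, rT = c *: Px0) /\ (exists c : R, rB = c *: Px0).
Proof.
move=> _ _ _ orth P0 _ xstar [[TS Teq] Tmin] [[BS Beq] Bmin].
have pp : 0 < dotv Px0 Px0.
  by rewrite lt_def dotv_ge0 andbT; apply: contra P0 => /eqP/dotv_eq0 ->.
have PS : (Px0 <= S)%MS by case: orth.
split.
- have [a [w [ET [wS [wP [Pw [x0w [wx0 [x0P Px0']]]]]]]]] := decomp orth P0 TS.
  rewrite ET in Teq Tmin *; exists a.
  have feas : (a *: Px0 <= S)%MS /\ dotv (x0 + a *: Px0 - xstar) xstar = 0.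
    split; first exact: scalemx_sub.
    have wx : dotv w xstar = 0 by rewrite /xstar dotvZr wx0 mulr0.
    by move: Teq; rewrite !dotvBl !dotvDl wx addr0.
  have := Tmin _ feas; rewrite /norm2 ler_sqrt ?dotv_ge0 //.
  rewrite !(dotvDl, dotvDr, dotvZl, dotvZr) wP Pw => Hle.
  have N0 : dotv w w = 0 by have := dotv_ge0 w; lra.
  by rewrite (dotv_eq0 _ N0) addr0.
- have [a [w [EB [wS [wP [Pw [x0w [wx0 [x0P Px0']]]]]]]]] := decomp orth P0 BS.
  rewrite EB in Beq Bmin *; exists a.
  have [w0|wn0] := eqVneq w 0; first by rewrite w0 addr0.
  exfalso.
  set p := dotv Px0 Px0 in pp x0P Px0'.
  set N := dotv w w.
  have Npos : 0 < N by rewrite lt_def dotv_ge0 andbT; apply: contra wn0 => /eqP/dotv_eq0 ->.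
  set b := Num.sqrt ((a + 1) ^+ 2 + N / p) - 1.
  have hq : 0 <= (a + 1) ^+ 2 + N / p.
    by rewrite addr_ge0 ?sqr_ge0 // divr_ge0 // ltW.
  have hb : (b + 1) ^+ 2 = (a + 1) ^+ 2 + N / p by rewrite /b subrK sqr_sqrtr.
  have ab : a < b.
    rewrite -(ltrD2r 1) /b subrK.
    apply: (le_lt_trans (ler_norm _)).
    rewrite -sqrtr_sqr ltr_sqrt; first by rewrite ltrDl divr_gt0.
    by rewrite ltr_wpDl ?sqr_ge0 // divr_gt0.
  have hb' : b ^+ 2 * p + 2 * b * p = a ^+ 2 * p + 2 * a * p + N.
    have : ((b + 1) ^+ 2) * p = ((a + 1) ^+ 2 + N / p) * p by rewrite hb.
    rewrite mulrDl divfK ?gt_eqF //. 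
    move=> h; rewrite -[LHS]addr0 -[RHS]addr0; nra.
  have feas : (b *: Px0 <= S)%MS /\ norm2 (x0 + b *: Px0) = Rad.
    split; first exact: scalemx_sub.
    rewrite -Beq /norm2; congr Num.sqrt.
    rewrite !(dotvDl, dotvDr, dotvZl, dotvZr) wP Pw x0w wx0 x0P Px0' -/p -/N.
    nra.
  have := Bmin _ feas; rewrite /norm2 ler_sqrt ?dotv_ge0 //.
  rewrite !(dotvDl, dotvDr, dotvZl, dotvZr) wP Pw -/p -/N => Hle.
  nra.
Qed.
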